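(* Let $\nu$ be a Krull valuation on $\mathbb{K}[x]$ and $Q$ a key polynomial for $\nu$ with $n=\deg Q$. Let $f=f_0+f_1Q+\dots+f_sQ^s$ where each $f_i\in\mathbb{K}[x]$ is either $0$ or a product of polynomials of degree smaller than $n$. Then $\nu_Q(f)=\min_{0\le i\le s}\{\nu(f_iQ^i)\}$.
   Context: Truncation: every $g\in\mathbb{K}[x]$ has a unique $Q$-expansion $g=g_0+g_1Q+\dots+g_tQ^t$ with $\deg g_i<\deg Q$; $\nu_Q(g)=\min_i\nu(g_iQ^i)$. Key polynomials: for nonzero $g$, with Hasse derivatives $\partial_bg=\sum_{i\ge b}\binom{i}{b}a_ix^{i-b}$ for $g=\sum a_ix^i$, $\epsilon(g)=\max_{1\le b\le\deg g}(\nu(g)-\nu(\partial_bg))/b$ if $\deg g>0$ and $\epsilon(g)=-\infty$ if $g$ is constant; a monic $Q$ is a key polynomial for $\nu$ if $\epsilon(g)\ge\epsilon(Q)$ implies $\deg g\ge\deg Q$ for all $g$. (For a key polynomial $Q$, $\nu_Q$ is a valuation.) *)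

(* Defs.v *)
From mathcomp Require Import all_boot all_order all_algebra.
Set Implicit Arguments. Unset Strict Implicit. Unset Printing Implicit Defensive.
Import GRing.Theory.
Local Open Scope ring_scope.

Record ordered_group (G : zmodType) (le : rel G) : Prop := OrderedGroup {
  og_refl : reflexive le;
  og_anti : antisymmetric le;
  og_trans : transitive le;
  og_total : total le;
  og_add : forall a b c, le a b -> le (a + c) (b + c)
}.

(* G u {oo}: None stands for oo (the top element). *)
Definition oadd (G : zmodType) (x y : option G) : option G :=
  match x, y with Some a, Some b => Some (a + b) | _, _ => None end.
Definition ole (G : zmodType) (le : rel G) (x y : option G) : bool :=
  match x, y with
  | _, None => true
  | None, Some _ => false
  | Some a, Some b => le a b
  end.
Definition omin (G : zmodType) (le : rel G) (x y : option G) : option G :=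
  if ole le x y then x else y.

(* A Krull valuation nu on K[x] with values in G u {oo} (G ordered by le).
   READING: nu^{-1}(oo) = {0} (nu(f) = oo iff f = 0), as needed for
   epsilon(g) to be defined. *)
Record krull_valuation (K : fieldType) (G : zmodType) (le : rel G)
    (nu : {poly K} -> option G) : Prop := KrullValuation {
  kv_group : ordered_group le;
  kv_zero : forall f, nu f = None <-> f = 0;
  kv_mul : forall f g, nu (f * g) = oadd (nu f) (nu g);
  kv_add : forall f g, ole le (omin le (nu f) (nu g)) (nu (f + g))
}.

(* Hasse derivatives: p^`N(b) = \sum_{i>=b} binom(i,b) a_i x^(i-b)
   (mathcomp's nderivn). *)

(* Elements of the divisible hull (G (x) Q) u {-oo}: Some (a, b) with
   b > 0 stands for a/b, None stands for -oo. *)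
Definition frac_le (G : zmodType) (le : rel G) (x y : option (G * nat)) : bool :=
  match x, y with
  | None, _ => true
  | Some _, None => false
  | Some (a, b), Some (c, d) => le (a *+ d) (c *+ b)
  end.

(* The b-th candidate (nu(g) - nu(d_b g))/b in the definition of epsilon
   (-oo when d_b g = 0, i.e. nu(d_b g) = oo). *)
Definition eps_term (K : fieldType) (G : zmodType) (nu : {poly K} -> option G)
    (g : {poly K}) (b : nat) : option (G * nat) :=
  match nu g, nu (g^`N(b)) with
  | Some a, Some d => Some (a - d, b)
  | _, _ => None
  end.

(* epsilon(g) >= epsilon(h), where
   epsilon(g) = max_{1<=b<=deg g} (nu(g) - nu(d_b g))/b  if deg g > 0,
   epsilon(g) = -oo  if g is constant.
   max_b A_b >= max_c B_c  is written out as  exists b, forall c, B_c <= A_b. *)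
Definition eps_ge (K : fieldType) (G : zmodType) (le : rel G)
    (nu : {poly K} -> option G) (g h : {poly K}) : Prop :=
  if (size g <= 1)%N then is_true (size h <= 1)%N
  else (size h <= 1)%N \/
       exists2 b : nat, (1 <= b <= (size g).-1)%N &
         forall c : nat, (1 <= c <= (size h).-1)%N ->
           frac_le le (eps_term nu h c) (eps_term nu g b).

Definition key_poly (K : fieldType) (G : zmodType) (le : rel G)
    (nu : {poly K} -> option G) (Q : {poly K}) : Prop :=
  Q \is monic /\
  forall g : {poly K}, g != 0 -> eps_ge le nu g Q ->
    ((size Q).-1 <= (size g).-1)%N.

(* The i-th coefficient g_i of the Q-expansion g = sum_i g_i Q^i with
   deg g_i < deg Q (for Q monic of positive degree). *)
Definition qexp_coef (K : fieldType) (Q g : {poly K}) (i : nat) : {poly K} :=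
  (g %/ Q ^+ i) %% Q.

(* Truncation nu_Q(g) = min_i nu(g_i Q^i); indices i >= size g give g_i = 0. *)
Definition truncation (K : fieldType) (G : zmodType) (le : rel G)
    (nu : {poly K} -> option G) (Q g : {poly K}) : option G :=
  \big[omin le/None]_(i < size g) nu (qexp_coef Q g i * Q ^+ i).

(* Main.v *)
Require Import Defs.
From mathcomp Require Import all_boot all_order all_algebra zify.
Set Implicit Arguments. Unset Strict Implicit. Unset Printing Implicit Defensive.
Import GRing.Theory.
Local Open Scope ring_scope.

Section OG.
Variables (G : zmodType) (le : rel G).
Hypothesis hG : ordered_group le.

Lemma leR x : le x x. Proof. exact: (og_refl hG). Qed.
Lemma leT x y z : le x y -> le y z -> le x z.
Proof. by move=> h1 h2; exact: (og_trans hG h1 h2). Qed.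
Lemma leA x y : le x y -> le y x -> x = y.
Proof. by move=> h1 h2; apply: (og_anti hG); rewrite h1 h2. Qed.
Lemma leTot x y : le x y || le y x. Proof. exact: (og_total hG). Qed.
Lemma leNW x y : ~~ le x y -> le y x.
Proof. by move=> h; move: (leTot x y); rewrite (negbTE h). Qed.
Lemma leD2r a b c : le a b -> le (a + c) (b + c). Proof. exact: (og_add hG). Qed.
Lemma leD2l a b c : le a b -> le (c + a) (c + b).
Proof. by move=> h; rewrite ![c + _]addrC; apply: leD2r. Qed.
Lemma leD a b c d : le a b -> le c d -> le (a + c) (b + d).
Proof. by move=> h1 h2; apply: (leT (leD2r c h1)); apply: leD2l. Qed.
Lemma leD2rE a b c : le (a + c) (b + c) = le a b.
Proof.
apply/idP/idP => [h|]; last exact: leD2r.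
by have := leD2r (- c) h; rewrite !addrK.
Qed.
Lemma leD2lE a b c : le (c + a) (c + b) = le a b.
Proof. by rewrite ![c + _]addrC leD2rE. Qed.
Lemma ltD a b c d : ~~ le b a -> le c d -> ~~ le (b + d) (a + c).
Proof.
move=> h1 h2; apply/negP => h3; case/negP: h1.
by rewrite -(leD2rE _ _ d); apply: (leT h3); apply: leD2l.
Qed.
Lemma ltD' a b c d : le a b -> ~~ le d c -> ~~ le (b + d) (a + c).
Proof. by move=> h1 h2; rewrite addrC [a + _]addrC; apply: ltD. Qed.
Lemma leMn a b n : le a b -> le (a *+ n) (b *+ n).
Proof.
move=> h; elim: n => [|n IH]; first by rewrite !mulr0n leR.
by rewrite !mulrS; apply: leD.
Qed.
Lemma ltMn a b n : (0 < n)%N -> ~~ le b a -> ~~ le (b *+ n) (a *+ n).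
Proof.
case: n => // n _ h; elim: n => [|n IH]; first by rewrite !mulr1n.
rewrite (mulrS b) (mulrS a); apply: ltD => //.
exact: leNW.
Qed.
Lemma leMnE a b n : (0 < n)%N -> le (a *+ n) (b *+ n) = le a b.
Proof.
move=> n0; apply/idP/idP; last exact: leMn.
apply: contraLR => h; apply/negP => h'.
have := ltMn n0 h.
have hb := leNW h.
by rewrite (leA h' (leMn n hb)) leR.
Qed.

Definition olt (x y : option G) := ~~ ole le y x.
Lemma oleR x : ole le x x. Proof. by case: x => //= a; apply: leR. Qed.
Lemma oleT x y z : ole le x y -> ole le y z -> ole le x z.
Proof. by case: x; case: y; case: z => //= a b c; apply: leT. Qed.
Lemma oleA x y : ole le x y -> ole le y x -> x = y.
Proof. by case: x; case: y => //= a b h1 h2; rewrite (leA h2 h1). Qed.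
Lemma oleTot x y : ole le x y || ole le y x.
Proof. by case: x; case: y => //= a b; apply: leTot. Qed.
Lemma oleNW x y : ~~ ole le x y -> ole le y x.
Proof. by move=> h; move: (oleTot x y); rewrite (negbTE h). Qed.
Lemma oleNone x : ole le x None. Proof. by case: x. Qed.
Lemma oleNone_l x : ole le None x -> x = None. Proof. by case: x. Qed.
Lemma omin_l x y : ole le (omin le x y) x.
Proof. rewrite /omin; case: ifP => h; [exact: oleR | exact: oleNW (negbT h)]. Qed.
Lemma omin_r x y : ole le (omin le x y) y.
Proof. rewrite /omin; case: ifP => h //; exact: oleR. Qed.
Lemma omin_glb z x y : ole le z x -> ole le z y -> ole le z (omin le x y).
Proof. by rewrite /omin; case: ifP. Qed.
Lemma omin_cases x y : omin le x y = x \/ omin le x y = y.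
Proof. by rewrite /omin; case: ifP; [left|right]. Qed.
Lemma oadd_le x y z : ole le x y -> ole le (oadd x z) (oadd y z).
Proof. by case: x; case: y; case: z => //= a b c; apply: leD2r. Qed.
Lemma oaddC (x y : option G) : oadd x y = oadd y x.
Proof. by case: x; case: y => //= a b; rewrite addrC. Qed.
Lemma oaddA (x y z : option G) : oadd x (oadd y z) = oadd (oadd x y) z.
Proof. by case: x; case: y; case: z => //= a b c; rewrite addrA. Qed.
Lemma oadd_lt x y z : olt x y -> z != None -> olt (oadd x z) (oadd y z).
Proof.
move=> h; case: z => // c _; move: h; rewrite /olt; case: x => [a|]; case: y => [b|] //=;
by rewrite ?leD2rE.
Qed.

Lemma bigomin_lb (I : eqType) (r : seq I) (P : pred I) (F : I -> option G) i :
  i \in r -> P i -> ole le (\big[omin le/None]_(j <- r | P j) F j) (F i).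
Proof.
elim: r => // a r IH; rewrite inE big_cons => /orP [/eqP-> Pi|ir Pi].
  by rewrite Pi; apply: omin_l.
case: ifP => _; last exact: IH.
exact: oleT (omin_r _ _) (IH ir Pi).
Qed.
Lemma bigomin_att (I : eqType) (r : seq I) (P : pred I) (F : I -> option G) :
  let m := \big[omin le/None]_(j <- r | P j) F j in
  m = None \/ exists2 i, (i \in r) && P i & m = F i.
Proof.
elim: r => [|a r IH] /=; first by rewrite big_nil; left.
rewrite big_cons; case: ifP => Pa; last first.
  case: IH => [->|[i /andP [ir Pi] e]]; first by left.
  by right; exists i; rewrite ?inE ?ir ?orbT.
case: (omin_cases (F a) (\big[omin le/None]_(j <- r | P j) F j)) => ->.
  by right; exists a; rewrite ?inE ?eqxx.
case: IH => [->|[i /andP [ir Pi] e]]; first by left.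
by right; exists i; rewrite ?inE ?ir ?orbT.
Qed.
Lemma bigomin_eq (I : eqType) (r : seq I) (P : pred I) (F : I -> option G) m :
  (forall i, i \in r -> P i -> ole le m (F i)) ->
  (m = None \/ exists2 i, (i \in r) && P i & F i = m) ->
  \big[omin le/None]_(j <- r | P j) F j = m.
Proof.
move=> lb att; case: (bigomin_att r P F) => [e|[i /andP [ir Pi] e]].
  case: att => [->//|[i /andP [ir Pi] ei]].
  by move: (lb i ir Pi); rewrite -ei => h; rewrite e; move: (bigomin_lb F ir Pi); rewrite e ei => /oleNone_l.
case: att => [em|[k /andP [kr Pk] ek]].
  by move: (lb i ir Pi); rewrite em => /oleNone_l; rewrite e.
apply: oleA; first by rewrite -ek; apply: bigomin_lb.
by rewrite e; apply: lb.
Qed.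

Lemma ominA x y z : omin le x (omin le y z) = omin le (omin le x y) z.
Proof.
apply: oleA; apply: omin_glb.
- apply: omin_glb; first exact: omin_l.
  exact: oleT (omin_r _ _) (omin_l _ _).
- exact: oleT (omin_r _ _) (omin_r _ _).
- exact: oleT (omin_l _ _) (omin_l _ _).
- apply: omin_glb; last exact: omin_r.
  exact: oleT (omin_l _ _) (omin_r _ _).
Qed.
Lemma omin_None_r x : omin le x None = x.
Proof. apply: oleA; [exact: omin_l | apply: omin_glb; [exact: oleR | exact: oleNone]]. Qed.
Lemma omin_None_l x : omin le None x = x.
Proof. apply: oleA; [exact: omin_r | apply: omin_glb; [exact: oleNone | exact: oleR]]. Qed.
Lemma bigomin_recr (F : nat -> option G) t :
  \big[omin le/None]_(i < t.+1) F i = omin le (\big[omin le/None]_(i < t) F i) (F t).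
Proof.
elim: t F => [|t IH] F; first by rewrite big_ord_recl !big_ord0 omin_None_r omin_None_l.
rewrite big_ord_recl (IH (fun i => F i.+1)) (big_ord_recl t) ominA.
by [].
Qed.
End OG.
Section Leib.
Variable R : comNzRingType.

Lemma hornerXself (p : {poly R}) : (p^:P).['X] = p.
Proof.
elim/poly_ind: p => [|p c IH]; first by rewrite rmorph0 horner0.
by rewrite rmorphD rmorphM /= map_polyX map_polyC /= hornerMXaddC IH.
Qed.

Definition tay (p : {poly R}) : {poly {poly R}} := ((p^:P)^:P).[('X)%:P + 'X].

Lemma tayE (p : {poly R}) : tay p = \poly_(i < size p) p^`N(i).
Proof.
rewrite /tay nderiv_taylor; last exact: mulrC.
rewrite !size_map_polyC poly_def; apply: eq_bigr => i _.
by rewrite !nderivn_map horner_map /= hornerXself mul_polyC.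
Qed.

Lemma coef_tay (p : {poly R}) k : (tay p)`_k = p^`N(k).
Proof.
rewrite tayE coef_poly; case: ltnP => // h.
by rewrite nderivn_poly0.
Qed.

Lemma tayM (p q : {poly R}) : tay (p * q) = tay p * tay q.
Proof. by rewrite /tay !rmorphM /= hornerM. Qed.

Lemma nderivnM (p q : {poly R}) k :
  (p * q)^`N(k) = \sum_(i < k.+1) p^`N(i) * q^`N(k - i).
Proof. by rewrite -coef_tay tayM coefM; apply: eq_bigr => i _; rewrite !coef_tay. Qed.
End Leib.

Section Val.
Variables (K : fieldType) (G : zmodType) (le : rel G) (nu : {poly K} -> option G).
Hypothesis hnu : krull_valuation le nu.
Let hG := kv_group hnu.

Lemma nu0 : nu 0 = None. Proof. by apply/(kv_zero hnu). Qed.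
Lemma nu_Some p : p != 0 -> exists a, nu p = Some a.
Proof.
move=> h; case e: (nu p) => [a|]; first by exists a.
by move/(kv_zero hnu): e => e; rewrite e eqxx in h.
Qed.
Lemma nuM p q : nu (p * q) = oadd (nu p) (nu q). Proof. exact: (kv_mul hnu). Qed.
Lemma nu1 : nu 1 = Some 0.
Proof.
have [a ea] := nu_Some (oner_neq0 {poly K}).
have := nuM 1 1; rewrite mulr1 ea /= => -[] /esym /eqP.
by rewrite -subr_eq0 addrK => /eqP->.
Qed.
Lemma nuN1 : nu (-1) = Some 0.
Proof.
have [b eb] : exists b, nu (-1) = Some b by apply: nu_Some; rewrite oppr_eq0 oner_neq0.
have := nuM (-1) (-1); rewrite mulrNN mulr1 nu1 eb /= => -[] e.
congr Some.
case/orP: (leTot hG 0 b) => h.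
  apply: (leA hG) => //; have := leD2l hG b h; by rewrite addr0 -e.
apply: (leA hG) => //; have := leD2l hG b h; by rewrite addr0 -e.
Qed.
Lemma nuN p : nu (- p) = nu p.
Proof. by rewrite -mulN1r nuM nuN1; case: (nu p) => //= a; rewrite add0r. Qed.
Lemma nuD_ge z p q : ole le z (nu p) -> ole le z (nu q) -> ole le z (nu (p + q)).
Proof. by move=> h1 h2; apply: (oleT hG) (kv_add hnu p q); apply: omin_glb. Qed.
Lemma nuB_ge z p q : ole le z (nu p) -> ole le z (nu q) -> ole le z (nu (p - q)).
Proof. by move=> h1 h2; apply: nuD_ge; rewrite ?nuN. Qed.
Lemma nu_sum_P (P : option G -> bool) (I : Type) (r : seq I) (Pr : pred I)
    (F : I -> {poly K}) :
  (forall x y, ole le x y -> P x -> P y) -> P None ->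
  (forall i, Pr i -> P (nu (F i))) -> P (nu (\sum_(i <- r | Pr i) F i)).
Proof.
move=> up PN hF; apply: (big_ind (fun p => P (nu p))) => //; first by rewrite nu0.
move=> x y Px Py; apply: up (kv_add hnu x y) _.
by case: (omin_cases le (nu x) (nu y)) => ->.
Qed.
Lemma nu_sum_ge z (I : Type) (r : seq I) (Pr : pred I) (F : I -> {poly K}) :
  (forall i, Pr i -> ole le z (nu (F i))) -> ole le z (nu (\sum_(i <- r | Pr i) F i)).
Proof.
move=> h; apply: (nu_sum_P (P := fun x => ole le z x)) => //; last exact: oleNone.
by move=> x y h1 h2; exact: (oleT hG h2 h1).
Qed.
Lemma nuD_lt p q : olt le (nu p) (nu q) -> nu (p + q) = nu p.
Proof.
move=> h; apply: (oleA hG).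
  have e : p = (p + q) + (- q) by rewrite addrK.
  have := kv_add hnu (p + q) (- q); rewrite -e nuN /omin.
  case: ifP => // _ h'; by move: h; rewrite /olt h'.
apply: (oleT hG) (kv_add hnu p q); rewrite /omin; case: ifP => h'.
  exact: oleR.
by move: h'; rewrite (oleNW hG h).
Qed.
End Val.

Lemma ex_max (T : Type) (R : T -> T -> bool) (f : nat -> T) N :
  (forall i j k, R (f i) (f j) -> R (f j) (f k) -> R (f i) (f k)) ->
  (forall i j, R (f i) (f j) || R (f j) (f i)) ->
  exists2 b, (b <= N)%N & forall c, (c <= N)%N -> R (f c) (f b).
Proof.
move=> tr to; elim: N => [|N [b bN IH]].
  exists 0%N => // c; rewrite leqn0 => /eqP->; by have := to 0%N 0%N; rewrite orbb.
case/orP: (to b N.+1) => h.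
  exists N.+1 => // c; rewrite leq_eqVlt => /orP [/eqP->|cN].
    by have := to N.+1 N.+1; rewrite orbb.
  exact: tr (IH c cN) h.
exists b; first exact: leqW.
move=> c; rewrite leq_eqVlt => /orP [/eqP->//|cN]; exact: IH.
Qed.

Section Frac.
Variables (G : zmodType) (le : rel G).
Hypothesis hG : ordered_group le.
Definition posd (x : option (G * nat)) := if x is Some (_, b) then (0 < b)%N else true.

Lemma frac_total x y : frac_le le x y || frac_le le y x.
Proof. by case: x => [[a b]|]; case: y => [[c d]|] //=; apply: leTot. Qed.

Lemma frac_trans x y z : posd x -> posd y -> posd z ->
  frac_le le x y -> frac_le le y z -> frac_le le x z.
Proof.
case: x => [[a b]|] //; case: y => [[c d]|] //; case: z => [[e f]|] //= b0 d0 f0 h1 h2.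
rewrite -(leMnE hG _ _ d0) -!mulrnA [(f * d)%N]mulnC [(b * d)%N]mulnC !mulrnA.
apply: (leT hG (leMn hG f h1)).
by rewrite -!mulrnA [(b * f)%N]mulnC !mulrnA; apply: leMn.
Qed.
End Frac.

Section Key.
Variables (K : fieldType) (G : zmodType) (le : rel G) (nu : {poly K} -> option G)
  (Q : {poly K}).
Hypothesis hnu : krull_valuation le nu.
Hypothesis hkey : key_poly le nu Q.
Hypothesis hn : (0 < (size Q).-1)%N.
Let hG := kv_group hnu.
Let n := (size Q).-1.

Lemma Q_neq0 : Q != 0.
Proof. by apply: contraTneq hn => ->; rewrite size_poly0. Qed.

Lemma QNn_neq0 : Q^`N(n) != 0.
Proof.
apply/eqP => e; have := congr1 (fun p : {poly K} => p`_0) e; rewrite /= coef_nderivn addn0 binn mulr1n coef0.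
have := monicP hkey.1; rewrite /lead_coef -/n => ->; exact/eqP/oner_neq0.
Qed.

Lemma eps_posd g b : posd (eps_term nu g b.+1).
Proof. by rewrite /eps_term; case: (nu g) => // a; case: (nu _). Qed.

Lemma key_data : exists q B E, [/\ nu Q = Some q, (0 < B)%N,
  nu (Q^`N(B)) = Some (q - E) &
  forall c, (1 <= c <= n)%N -> frac_le le (eps_term nu Q c) (Some (E, B))].
Proof.
have [b bn hb] := ex_max (R := frac_le le) (f := fun c => eps_term nu Q c.+1) n.-1
  (fun i j k => frac_trans hG (eps_posd _ _) (eps_posd _ _) (eps_posd _ _))
  (fun i j => frac_total hG _ _).
have [q eq] := nu_Some hnu Q_neq0.
have [dn edn] := nu_Some hnu QNn_neq0.
have := hb n.-1 (leqnn _); rewrite prednK // /eps_term eq edn.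
case ed: (nu (Q^`N(b.+1))) => [d|] // _.
exists q, b.+1, (q - d); split => //; first by rewrite opprB addrC subrK.
move=> c /andP [c1 cn]; have := hb c.-1; rewrite prednK // => h.
have cn' : (c.-1 <= n.-1)%N by lia.
have := h cn'.
by rewrite /eps_term eq ed.
Qed.
End Key.

Section Good.
Variables (K : fieldType) (G : zmodType) (le : rel G) (nu : {poly K} -> option G)
  (Q : {poly K}) (q : G) (B : nat) (E : G).
Hypothesis hnu : krull_valuation le nu.
Hypothesis hkey : key_poly le nu Q.
Hypothesis hn : (0 < (size Q).-1)%N.
Hypothesis hq : nu Q = Some q.
Hypothesis hB : (0 < B)%N.
Hypothesis hQB : nu (Q^`N(B)) = Some (q - E).
Hypothesis hfr : forall c, (1 <= c <= (size Q).-1)%N ->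
  frac_le le (eps_term nu Q c) (Some (E, B)).
Let hG := kv_group hnu.

Definition abv (t : G) (x : option G) (j : nat) :=
  if x is Some d then ~~ le (d *+ B + E *+ j) t else true.
Definition wabv (t : G) (x : option G) (j : nat) :=
  if x is Some d then le t (d *+ B + E *+ j) else true.
Definition good (h : {poly K}) := exists2 a, nu h = Some a &
  forall j, (0 < j)%N -> abv (a *+ B) (nu (h^`N(j))) j.

Lemma abv_up t x y j : ole le x y -> abv t x j -> abv t y j.
Proof.
case: x => [a|]; case: y => [b|] //= h1 h2; apply/negP => h3; case/negP: h2.
have h4 : le (a *+ B + E *+ j) (b *+ B + E *+ j) by rewrite (leD2rE hG); exact: (leMn hG B h1).
exact: (leT hG h4 h3).
Qed.
Lemma abv_thr t t' x j : le t' t -> abv t x j -> abv t' x j.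
Proof.
case: x => [d|] //= h1 h2; apply/negP => h3; case/negP: h2; exact: (leT hG h3 h1).
Qed.
Lemma wabv_abv t1 t2 x y i k : wabv t1 x i -> abv t2 y k -> abv (t1 + t2) (oadd x y) (i + k).
Proof.
case: x => [d1|]; case: y => [d2|] //= h1 h2.
have -> : (d1 + d2) *+ B + E *+ (i + k) = (d1 *+ B + E *+ i) + (d2 *+ B + E *+ k).
  by rewrite mulrnDl mulrnDr addrACA.
exact: (ltD' hG h1 h2).
Qed.
Lemma abv_wabv t1 t2 x y i k : abv t1 x i -> wabv t2 y k -> abv (t1 + t2) (oadd x y) (i + k).
Proof. by move=> h1 h2; rewrite addrC oaddC addnC; apply: wabv_abv. Qed.

Lemma wabv0 (p : {poly K}) a : nu p = Some a -> wabv (a *+ B) (nu (p^`N(0))) 0.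
Proof. by rewrite nderivn0 => ->; rewrite /= mulr0n addr0 (leR hG). Qed.

Lemma wabvQ c : wabv (q *+ B) (nu (Q^`N(c))) c.
Proof.
case: c => [|c]; first exact: wabv0.
have [hc|hc] := leqP c.+1 (size Q).-1; last first.
  by rewrite nderivn_poly0 ?(nu0 hnu) //; lia.
have := @hfr c.+1 hc; rewrite /eps_term hq; case: (nu _) => [d|] //= h.
have := leD2r hG (d *+ B) h; by rewrite mulrnBl subrK addrC.
Qed.

Lemma good_small (h : {poly K}) : h != 0 -> (size h < size Q)%N -> good h.
Proof.
move=> h0 hs; have [a ea] := nu_Some hnu h0; exists a => // j j0.
have [hj|hj] := leqP (size h) j; first by rewrite nderivn_poly0 ?(nu0 hnu).
case ed: (nu (h^`N(j))) => [d|] //=; apply/negP => contra.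
have : eps_ge le nu h Q.
  rewrite /eps_ge ifN; last by rewrite -ltnNge; lia.
  right; exists j; first by apply/andP; split; lia.
  move=> c hc; apply: (frac_trans hG _ _ _ (hfr hc)).
  - by case: c hc => // c _; apply: eps_posd.
  - by [].
  - by rewrite /eps_term ea ed /=.
  rewrite /eps_term ea ed /= -(leD2rE hG _ _ (d *+ B)) mulrnBl subrK.
  by rewrite addrC.
move/(hkey.2 h h0); lia.
Qed.

Lemma good_wabv p a : nu p = Some a ->
  (forall j, (0 < j)%N -> abv (a *+ B) (nu (p^`N(j))) j) ->
  forall j, wabv (a *+ B) (nu (p^`N(j))) j.
Proof.
move=> ea h [|j]; first exact: wabv0.
by have := h j.+1 isT; case: (nu _) => //= d; apply: leNW.
Qed.

Lemma good_mul p1 p2 : good p1 -> good p2 -> good (p1 * p2).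
Proof.
move=> [a1 e1 h1] [a2 e2 h2]; exists (a1 + a2); first by rewrite (nuM hnu) e1 e2.
move=> j j0; rewrite nderivnM.
apply: (nu_sum_P hnu (P := fun x => abv ((a1 + a2) *+ B) x j)) => //.
  by move=> x y; apply: abv_up.
move=> [i /= ij] _; rewrite (nuM hnu) mulrnDl.
case: i ij => [|i] ij.
  have := wabv_abv (wabv0 e1) (h2 j j0); by rewrite subn0.
have := abv_wabv (h1 i.+1 isT) (good_wabv e2 h2 (j - i.+1)).
by rewrite subnKC.
Qed.

Lemma nuD_P (P : option G -> bool) x y :
  (forall u v, ole le u v -> P u -> P v) -> P (nu x) -> P (nu y) -> P (nu (x + y)).
Proof.
move=> up Px Py; apply: up (kv_add hnu x y) _.
by case: (omin_cases le (nu x) (nu y)) => ->.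
Qed.

Lemma abv_olt t x j v : abv t x j -> le (v *+ B + E *+ j) t -> olt le (Some v) x.
Proof.
case: x => [d|] //= h1 h2; apply/negP => h3; case/negP: h1.
have h4 : le (d *+ B + E *+ j) (v *+ B + E *+ j) by rewrite (leD2rE hG); exact: leMn.
exact: (leT hG h4 h2).
Qed.

Lemma divsmall (r1 r2 : {poly K}) : (size r1 < size Q)%N -> (size r2 < size Q)%N ->
  [/\ (size ((r1 * r2) %/ Q)%R < size Q)%N, (size ((r1 * r2) %% Q)%R < size Q)%N,
      nu (r1 * r2 %% Q) = nu (r1 * r2) &
      ole le (nu (r1 * r2)) (nu (r1 * r2 %/ Q * Q))].
Proof.
move=> s1 s2; have Q0 := Q_neq0 hn.
have sa : (size ((r1 * r2) %/ Q)%R < size Q)%N.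
  rewrite size_divp //; apply: leq_ltn_trans (leq_sub2r _ (size_polyMleq r1 r2)) _.
  have aux : forall b c d : nat, (b < d)%N -> (c < d)%N -> ((b + c).-1 - d.-1 < d)%N by move=> *; lia.
  exact: aux s1 s2.
set h := (r1 * r2)%R; set a := (h %/ Q)%R; set c := (h %% Q)%R.
have sc : (size c < size Q)%N by rewrite /c ltn_modp.
have [h0|h0] := eqVneq h 0.
  by rewrite /a /c h0 mod0p div0p mul0r (nu0 hnu); split => //; rewrite size_poly0 size_poly_gt0.
have hd : a * Q = h - c by rewrite [in h - c](divp_eq h Q) addrK.
have goodh : good h.
  by apply: good_mul; apply: good_small => //; apply: contraNneq h0 => e;
     rewrite /h e ?mul0r ?mulr0.
have lt : olt le (nu h) (nu (a * Q)).
  have [->|a0] := eqVneq a 0.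
    by rewrite mul0r (nu0 hnu); case: goodh => eta -> _.
  apply/negP => hle.
  have [al ea] := nu_Some hnu a0.
  have [eta eh ht] := goodh.
  have eaQ : nu (a * Q) = Some (al + q) by rewrite (nuM hnu) ea hq.
  move: hle; rewrite eaQ eh /= => hle.
  have [al' ea' ha] := good_small a0 sa; move: ea'; rewrite ea => -[eal]; subst al'.
  have e1 : nu ((a * Q)^`N(B)) = Some (al + (q - E)).
    rewrite nderivnM big_ord_recl subn0 nderivn0 (nuD_lt hnu) (nuM hnu) ea hQB //.
    rewrite /=.
    apply: (abv_olt (t := (al + q) *+ B) (j := B)); last first.
      by rewrite -mulrnDl addrA subrK (leR hG).
    apply: (nu_sum_P hnu (P := fun x => abv ((al + q) *+ B) x B)) => //.
      by move=> x y; apply: abv_up.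
    move=> [i /= iB] _; rewrite (nuM hnu) mulrnDl.
    have := abv_wabv (ha (bump 0 i) isT) (wabvQ (B - bump 0 i)).
    by rewrite subnKC.
  have e2 : abv ((al + q) *+ B) (nu ((a * Q)^`N(B))) B.
    rewrite hd nderivnB.
    apply: (nuD_P (P := fun x => abv ((al + q) *+ B) x B)).
    - by move=> x y; apply: abv_up.
    - by apply: abv_thr (ht B hB); exact: leMn.
    rewrite (nuN hnu).
    have [->|c0] := eqVneq c 0; first by rewrite nderivn_poly0 ?size_poly0 // (nu0 hnu).
    have [ga ega hc] := good_small c0 sc.
    have hga : ole le (Some (al + q)) (nu c).
      have -> : c = h - a * Q by rewrite hd opprB addrC subrK.
      apply: (nuB_ge hnu); first by rewrite eh.
      by rewrite eaQ (oleR hG).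
    move: hga; rewrite ega /= => hga.
    by apply: abv_thr (hc B hB); exact: leMn.
  move: e2; rewrite e1 /= -mulrnDl -addrA subrK.
  by rewrite (leR hG).
split => //; last exact: (oleNW hG lt).
have -> : c = h + - (a * Q) by rewrite hd opprB addrC subrK.
by rewrite (nuD_lt hnu) // (nuN hnu).
Qed.

Definition SQ (g : nat -> {poly K}) N := \sum_(j < N) g j * Q ^+ j.

Lemma SQ_ext (g : nat -> {poly K}) N M : (forall j, (N <= j)%N -> g j = 0) -> (N <= M)%N -> SQ g M = SQ g N.
Proof.
move=> sup /subnKC <-; elim: (M - N)%N => [|d IH]; first by rewrite addn0.
by rewrite /SQ addnS big_ord_recr /= sup ?leq_addr // mul0r addr0; exact: IH.
Qed.

Lemma SQ_rec (g : nat -> {poly K}) N : SQ g N.+1 = SQ (fun j => g j.+1) N * Q + g 0%N.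
Proof.
rewrite /SQ big_ord_recl expr0 mulr1 addrC mulr_suml; congr (_ + _).
by apply: eq_bigr => i _; rewrite /= exprSr mulrA.
Qed.

Definition rep (h : {poly K}) := exists (e : nat -> {poly K}) (N : nat),
  [/\ forall j, (N <= j)%N -> e j = 0, h = SQ e N,
      forall j, (size (e j) < size Q)%N, nu (e 0%N) = nu h &
      forall j, ole le (nu h) (nu (e j * Q ^+ j))].

Lemma size1Q : (size (1%R : {poly K}) < size Q)%N.
Proof. by rewrite size_poly1; move: hn; case: (size Q) => [|[|]]. Qed.
Lemma size0Q : (size (0%R : {poly K}) < size Q)%N.
Proof. by rewrite size_poly0; move: hn; case: (size Q) => [|[|]]. Qed.

Lemma rep0 : rep 0.
Proof.
exists (fun _ => 0), 0%N; split => //; first by rewrite /SQ big_ord0.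
  by move=> _; exact: size0Q.
by move=> j; rewrite mul0r (nu0 hnu) (oleR hG).
Qed.

Lemma rep1 : rep 1.
Proof.
exists (fun j => if j == 0%N then 1 else 0), 1%N; split => //.
- by case.
- by rewrite /SQ big_ord1 /= expr0 mulr1.
- by case => [|j]; [exact: size1Q | exact: size0Q].
case => [|j]; first by rewrite expr0 mulr1 (oleR hG).
by rewrite mul0r (nu0 hnu) oleNone.
Qed.

Lemma rep_mul (p h : {poly K}) : (size p < size Q)%N -> rep h -> rep (p * h).
Proof.
move=> sp [e [N [sup eh se e0 ge]]].
pose a j := (p * e j) %/ Q; pose c j := (p * e j) %% Q.
have D j := divsmall sp (se j).
exists (fun k => c k + (if k is k'.+1 then a k' else 0)), N.+1; split.
- move=> [|j] hj //; rewrite /c /a (sup j.+1) ?(sup j) ?mulr0 ?mod0p ?div0p ?addr0 //.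
  exact: leqW.
- rewrite eh /SQ (eq_bigr _ (fun k _ => mulrDl _ _ _)) big_split /=.
  have cN : c N = 0 by rewrite /c sup // mulr0 mod0p.
  rewrite big_ord_recr /= cN mul0r addr0.
  rewrite big_ord_recl /= mul0r add0r mulr_sumr -big_split /=; apply: eq_bigr => i _.
  rewrite mulrA (_ : p * e i = a i * Q + c i); last by rewrite /a /c -divp_eq.
  by rewrite mulrDl addrC exprSr -mulrA [Q * _]mulrC mulrA.
- move=> [|j]; first by rewrite addr0; case: (D 0%N).
  case: (D j.+1) => _ s1 _ _; case: (D j) => s2 _ _ _.
  by rewrite (leq_ltn_trans (size_add _ _)) // gtn_max s1 s2.
- by rewrite addr0; case: (D 0%N) => _ _ -> _; rewrite !(nuM hnu) e0.
have key j : ole le (nu (p * h)) (nu (p * e j * Q ^+ j)).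
  rewrite -mulrA (nuM hnu) (nuM hnu) oaddC [oadd (nu p) _]oaddC; exact: oadd_le.
move=> k; rewrite mulrDl; apply: (nuD_ge hnu).
  have hck : nu (c k) = nu (p * e k) by case: (D k).
  by rewrite [nu (c k * _)](nuM hnu) hck -(nuM hnu); apply: key.
case: k => [|k]; first by rewrite mul0r (nu0 hnu) oleNone.
rewrite exprS mulrA; apply: (oleT hG (key k)).
case: (D k) => _ _ _; rewrite !(nuM hnu) => hak.
exact: (oadd_le hG _ hak).
Qed.

Lemma rep_prod (ps : seq {poly K}) :
  all (fun p : {poly K} => ((size p).-1 < (size Q).-1)%N) ps -> rep (\prod_(p <- ps) p).
Proof.
elim: ps => [|p ps IH]; first by rewrite big_nil => _; exact: rep1.
rewrite big_cons /= => /andP [hp hps]; apply: rep_mul; last exact: IH.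
by move: hp hn; case: (size p) => [|k]; case: (size Q) => [|[|m]].
Qed.

Lemma SQ_eq (g1 g2 : nat -> {poly K}) N : (forall j, g1 j = g2 j) -> SQ g1 N = SQ g2 N.
Proof. by move=> h; apply: eq_bigr => i _; rewrite h. Qed.

Lemma qexp_SQ (g : nat -> {poly K}) N : (forall j, (size (g j) < size Q)%N) ->
  (forall j, (N <= j)%N -> g j = 0) -> forall k, qexp_coef Q (SQ g N) k = g k.
Proof.
move=> sg sup k; rewrite /qexp_coef; elim: k g N sg sup => [|k IH] g N sg sup.
  by rewrite expr0 divp1 -(SQ_ext sup (leqnSn N)) SQ_rec modp_addl_mul_small.
rewrite exprS -divp_divl -(SQ_ext sup (leqnSn N)) SQ_rec divp_addl_mul_small //.
by apply: IH => // j hj; apply: sup; exact: leqW.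
Qed.

Lemma qexp_big (f : {poly K}) k : (size f <= k)%N -> qexp_coef Q f k = 0.
Proof.
move=> hk; rewrite /qexp_coef divp_small ?mod0p //.
have := size_exp Q k; have Q0 := Q_neq0 hn.
have d0 : (0 < size (Q ^+ k))%N by rewrite size_poly_gt0 expf_neq0.
have aux : forall a b c d : nat, (0 < d)%N -> (0 < b)%N -> (a <= c)%N -> d.-1 = (b * c)%N -> (a < d)%N.
  move=> a b c d d0' b0 ac; have : (c <= b * c)%N by rewrite leq_pmull. lia.
by apply: aux d0 hn hk.
Qed.

Lemma SQ_shift (e : nat -> {poly K}) Ne t M : (forall j, (Ne <= j)%N -> e j = 0) -> (t + Ne <= M)%N ->
  SQ (fun k => if (t <= k)%N then e (k - t)%N else 0) M = SQ e Ne * Q ^+ t.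
Proof.
move=> sup; elim: t M => [|t IH] M hM.
  rewrite expr0 mulr1 (SQ_eq _ (g2 := e)); first exact: SQ_ext.
  by move=> j; rewrite subn0.
case: M hM => [|M] hM; first by move: hM; rewrite addSn.
rewrite SQ_rec /= addr0 (SQ_eq _ (g2 := fun k => if (t <= k)%N then e (k - t)%N else 0)).
  by rewrite IH // exprSr mulrA.
by move=> j; rewrite ltnS subSS.
Qed.

Lemma olt_ole x y z : olt le x y -> ole le y z -> olt le x z.
Proof.
move=> h1 h2; apply/negP => h3; case/negP: h1; exact: (oleT hG h2 h3).
Qed.

Lemma assemble (f_ : nat -> {poly K}) t : (forall i, (i < t)%N -> rep (f_ i)) ->
  exists (g : nat -> {poly K}) (N : nat),
  [/\ forall j, (N <= j)%N -> g j = 0,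
      \sum_(i < t) f_ i * Q ^+ i = SQ g N,
      forall j, (size (g j) < size Q)%N,
      forall k, ole le (\big[omin le/None]_(i < t) nu (f_ i * Q ^+ i)) (nu (g k * Q ^+ k)) &
      \big[omin le/None]_(i < t) nu (f_ i * Q ^+ i) = None \/
      exists2 k, (k < t)%N & nu (g k * Q ^+ k) = \big[omin le/None]_(i < t) nu (f_ i * Q ^+ i)].
Proof.
elim: t => [|t IH] hr.
  exists (fun _ => 0), 0%N; split => //.
  - by rewrite big_ord0 /SQ big_ord0.
  - by move=> _; exact: size0Q.
  - by move=> k; rewrite big_ord0 mul0r (nu0 hnu) (oleR hG).
  - by left; rewrite big_ord0.
have [g [N [sup eq sg I1 I2]]] := IH (fun i hi => hr i (leqW hi)).
have [e [Ne [supe eqe se e0 gee]]] := hr t (leqnn _).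
have eM : \big[omin le/None]_(i < t.+1) nu (f_ i * Q ^+ i) =
  omin le (\big[omin le/None]_(i < t) nu (f_ i * Q ^+ i)) (nu (f_ t * Q ^+ t)).
  by rewrite (bigomin_recr hG (fun i => nu (f_ i * Q ^+ i))).
set Mt := \big[omin le/None]_(i < t) nu (f_ i * Q ^+ i).
set v := nu (f_ t * Q ^+ t).
pose Ek k := if (t <= k)%N then e (k - t)%N else 0.
have hE k : ole le v (nu (Ek k * Q ^+ k)).
  rewrite /Ek; case: ifP => hk; last by rewrite mul0r (nu0 hnu) oleNone.
  rewrite -(subnK hk) exprD mulrA (nuM hnu) /v (nuM hnu) subnK //.
  exact: (oadd_le hG _ (gee _)).
have hE0 : nu (Ek t * Q ^+ t) = v by rewrite /Ek leqnn subnn (nuM hnu) e0 /v (nuM hnu).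

exists (fun k => g k + Ek k), (N + (t + Ne))%N; split.
- move=> j hj; rewrite sup; last by apply: leq_trans hj; exact: leq_addr.
  rewrite add0r /Ek; case: ifP => // hk; apply: supe.
  by rewrite leq_subRL //; move: hj; lia.
- rewrite big_ord_recr /= eq /SQ (eq_bigr _ (fun k _ => mulrDl _ _ _)) big_split /=.
  have e1 : SQ g (N + (t + Ne)) = SQ g N := SQ_ext sup (leq_addr _ _).
  have e2 : SQ Ek (N + (t + Ne)) = SQ e Ne * Q ^+ t := SQ_shift supe (leq_addl _ _).
  by rewrite /SQ in e1 e2; rewrite e1 e2 -/(SQ e Ne) -eqe.
- move=> j; rewrite (leq_ltn_trans (size_add _ _)) // gtn_max sg /Ek.
  by case: ifP => _; [exact: se | exact: size0Q].
- move=> k; rewrite eM mulrDl /omin; case: ifP => hMv; apply: (nuD_ge hnu).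
  + exact: I1.
  + exact: (oleT hG hMv (hE k)).
  + exact: (oleT hG (oleNW hG (negbT hMv)) (I1 k)).
  + exact: hE.
rewrite eM /omin; case: ifP => hMv.
  case: I2 => [->|[k kt ek]]; first by left.
  right; exists k; first exact: leqW.
  by rewrite /Ek leqNgt kt /= addr0.
right; exists t => //.
rewrite mulrDl addrC (nuD_lt hnu) // hE0; apply: olt_ole (I1 t).
by rewrite /olt hMv.
Qed.

Lemma final (s : nat) (f_ : nat -> {poly K}) :
  (forall i, (i <= s)%N ->
     f_ i = 0 \/
     exists2 ps : seq {poly K},
       all (fun p : {poly K} => ((size p).-1 < (size Q).-1)%N) ps &
       f_ i = (\prod_(p <- ps) p)%R) ->
  truncation le nu Q (\sum_(i < s.+1) f_ i * Q ^+ i) =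
  \big[omin le/None]_(i < s.+1) nu (f_ i * Q ^+ i).
Proof.
move=> hf.
have reps : forall i, (i < s.+1)%N -> rep (f_ i).
  move=> i hi; case: (hf i hi) => [->|[ps hps ->]]; [exact: rep0 | exact: rep_prod].
have [g [N [sup eq sg I1 I2]]] := assemble reps.
rewrite /truncation eq; apply: bigomin_eq => //.
  by move=> i _ _; rewrite qexp_SQ.
case: I2 => [->|[k ks ek]]; first by left.
case eM: (\big[omin le/None]_(i < s.+1) nu (f_ i * Q ^+ i)) => [m|]; last by left.
right.
have kN : (k < size (SQ g N))%N.
  rewrite ltnNge; apply/negP => hk.
  have := qexp_big hk; rewrite qexp_SQ // => g0.
  by move: ek; rewrite eM g0 mul0r (nu0 hnu).
exists (Ordinal kN); first by rewrite mem_index_enum.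
by rewrite /= qexp_SQ // ek eM.
Qed.
End Good.

Theorem lemma3p3 (K : fieldType) (G : zmodType) (le : rel G)
    (nu : {poly K} -> option G) (Q : {poly K})
    (s : nat) (f_ : nat -> {poly K}) :
  krull_valuation le nu ->
  key_poly le nu Q ->
  (0 < (size Q).-1)%N ->
  (forall i, (i <= s)%N ->
     f_ i = 0 \/
     exists2 ps : seq {poly K},
       all (fun p : {poly K} => ((size p).-1 < (size Q).-1)%N) ps &
       f_ i = (\prod_(p <- ps) p)%R) ->
  truncation le nu Q (\sum_(i < s.+1) f_ i * Q ^+ i) =
  \big[omin le/None]_(i < s.+1) nu (f_ i * Q ^+ i).
Proof.
move=> hnu hkey hn hf.
have [q [B [E [hq hB hQB hfr]]]] := key_data hnu hkey hn.
exact: (final hnu hkey hn hq hB hQB hfr hf).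
Qed.
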